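(* Fix an active search instance $(h^\star,\mathcal D)$ with $\Pr(V=1)>0$ and costs $c_{\mathrm{rew}},c_{\mathrm{ver}}>0$, and consider the class of streaming policies described in the context. Then there exists a unique $\tau^\star\in(0,1)$ satisfying \[ c_{\mathrm{ver}}\,\mathbb E_{R\sim\mathcal D}\big[(h^\star(R)-\tau^\star)_+\big]=\tau^\star c_{\mathrm{rew}}, \] where $(u)_+=\max\{u,0\}$. Moreover, the optimal expected cost over streaming policies is $J^\star_{\mathrm{str}}(h^\star,\mathcal D)=c_{\mathrm{ver}}/\tau^\star$, and an optimal streaming policy is the threshold rule that verifies the current candidate with score $r$ if $h^\star(r)\ge\tau^\star$ and discards it if $h^\star(r)<\tau^\star$.
   Context: An active search instance $(h^\star,\mathcal D)$: $\mathcal D$ is a distribution on $\mathbb R$ and $h^\star:\mathbb R\to[0,1]$ measurable; a candidate has score $R\sim\mathcal D$ and label $V$ with $\Pr(V=1\mid R=r)=h^\star(r)$. A streaming policy (which knows $(\mathcal D,h^\star)$) proceeds in rounds $i=1,2,\dots$: it draws a fresh score $R_i\sim\mathcal D$ (independent of the past), pays $c_{\mathrm{rew}}$, observes $R_i$, then chooses, as a possibly randomized function of the past history and $R_i$, an action in $\{\text{discard},\text{verify}\}$. Discard removes the candidate permanently. Verify pays $c_{\mathrm{ver}}$ and reveals $V_i$ with $V_i\mid R_i\sim\mathrm{Bernoulli}(h^\star(R_i))$. The policy stops only when it verifies a candidate with $V_i=1$. $J^\star_{\mathrm{str}}(h^\star,\mathcal D)$ is the infimum over streaming policies of the expected total cost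 (sum of all $c_{\mathrm{rew}}$ and $c_{\mathrm{ver}}$ payments until stopping). *)

(* Defs.v *)
From HB Require Import structures.
From mathcomp Require Import all_boot all_order all_algebra.
From mathcomp Require Import all_classical all_reals all_analysis.
Set Implicit Arguments. Unset Strict Implicit. Unset Printing Implicit Defensive.
Import Order.TTheory GRing.Theory Num.Theory.
Local Open Scope classical_set_scope.
Local Open Scope ring_scope.

Section ActiveSearch.
Variable R : realType.

(* One past round of a still-running streaming policy: the observed score and
   the action taken (true = verified, and the revealed label was V = 0, since
   the process did not stop; false = discarded).  A history of length n is an
   n-tuple of such rounds (most recent first). *)
Definition round := (R * bool)%type.

(* A (behavioural, possibly randomized) streaming policy: given the history of
   length n and the current score r, [pol n h r] is the probability of
   verifying the current candidate. *)
Definition streaming_policy := forall n : nat, n.-tuple round -> R -> R.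

Definition is_streaming_policy (pol : streaming_policy) : Prop :=
  forall n : nat,
    measurable_fun setT (fun p : n.-tuple round * R => pol n p.1 p.2) /\
    (forall (h : n.-tuple round) (r : R), 0 <= pol n h r <= 1).

(* Expected cost paid during the next N rounds, starting from history h of
   length n (c_rew paid for each drawn candidate, c_ver for each verification;
   the process stops upon a verification revealing V = 1, which happens with
   probability hstar r). *)
Fixpoint cost_horizon (D : probability R R) (hstar : R -> R) (crew cver : R)
  (pol : streaming_policy) (N : nat) : forall n : nat, n.-tuple round -> \bar R :=
  match N with
  | 0 => fun n _ => 0%E
  | N'.+1 => fun n h =>
      (crew%:E +
       \int[D]_r
         ((pol n h r * cver)%:E
          + (pol n h r * (1 - hstar r))%:E
              * cost_horizon D hstar crew cver pol N' [tuple of (r, true) :: h]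
          + (1 - pol n h r)%:E
              * cost_horizon D hstar crew cver pol N' [tuple of (r, false) :: h]))%E
  end.

(* Expected total cost of a policy (in [0, +oo]): the supremum (= limit, by
   monotone convergence) of the expected costs over the first N rounds. *)
Definition expected_cost (D : probability R R) (hstar : R -> R) (crew cver : R)
  (pol : streaming_policy) : \bar R :=
  ereal_sup (range (fun N => cost_horizon D hstar crew cver pol N ([tuple] : 0.-tuple round))).

Definition Jstar_str (D : probability R R) (hstar : R -> R) (crew cver : R) : \bar R :=
  ereal_inf [set expected_cost D hstar crew cver pol | pol in is_streaming_policy].

Definition threshold_policy (hstar : R -> R) (tau : R) : streaming_policy :=
  fun n _ r => if tau <= hstar r then 1 else 0.

End ActiveSearch.

(* Main.v *)
Require Import Defs.
From HB Require Import structures.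
From mathcomp Require Import all_boot all_order all_algebra.
From mathcomp Require Import all_classical all_reals all_analysis.
From mathcomp Require Import ring lra.
Import Order.TTheory GRing.Theory Num.Theory.
Local Open Scope classical_set_scope.
Local Open Scope ring_scope.
Section Aux.
Context {R : realType}.
Variable D : probability R R.

Definition bm (g : R -> R) := measurable_fun setT g /\ exists M, forall x, `|g x| <= M.

Lemma bnd (f : R -> R) M : (forall x, `|f x| <= M) -> [bounded f x | x in (setT : set R)].
Proof. move=> H. exists M; split; first by rewrite num_real.
move=> y My x _; exact: (le_trans (H x) (ltW My)).
Qed.

Lemma bm_int g : bm g -> D.-integrable setT (EFin \o g).
Proof.
case=> mg [M HM]; apply: measurable_bounded_integrable => //.
  by apply: le_lt_trans (probability_le1 D measurableT) _; exact: ltry.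
exact: bnd HM.
Qed.

Definition EE g := Rintegral D setT g.

Lemma intE g : bm g -> (\int[D]_x (g x)%:E = (EE g)%:E)%E.
Proof. move=> /bm_int gi; rewrite /EE /Rintegral fineK //; exact: integrable_fin_num. Qed.

Lemma bm_cst k : bm (fun _ => k).
Proof. split; first exact: measurable_cst. by exists `|k|. Qed.

Lemma bmD f g : bm f -> bm g -> bm (fun x => f x + g x).
Proof.
move=> [mf [M1 H1]] [mg [M2 H2]]; split; first exact: measurable_realfun.measurable_funD.
exists (M1 + M2) => x; apply: le_trans (ler_normD _ _) _; exact: lerD.
Qed.

Lemma bmN f : bm f -> bm (fun x => - f x).
Proof.
move=> [mf [M1 H1]]; split; first exact: measurableT_comp.
by exists M1 => x; rewrite normrN.
Qed.

Lemma bmB f g : bm f -> bm g -> bm (fun x => f x - g x).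
Proof. by move=> bf bg; apply: bmD => //; apply: bmN. Qed.

Lemma bmM f g : bm f -> bm g -> bm (fun x => f x * g x).
Proof.
move=> [mf [M1 H1]] [mg [M2 H2]]; split; first exact: measurable_realfun.measurable_funM.
exists (M1 * M2) => x; rewrite normrM; apply: ler_pM => //.
Qed.

Lemma bm_max0 f : bm f -> bm (fun x => Num.max (f x) 0).
Proof.
move=> [mf [M1 H1]]; split.
  by apply: (measurable_realfun.measurable_maxr mf); exact: measurable_cst.
exists M1 => x; rewrite maxEle; case: (leP (f x) 0) => _; last exact: H1.
by rewrite normr0 (le_trans _ (H1 x)).
Qed.

Lemma bm_ind (g : R -> R) t : measurable_fun setT g ->
  bm (fun x => if t <= g x then 1 else 0).
Proof.
move=> mg; split.
  apply: measurable_fun_ifT; [|exact: measurable_cst|exact: measurable_cst].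
  by apply: measurable_realfun.measurable_fun_ler => //; exact: measurable_cst.
by exists 1 => x; case: ifP; rewrite ?normr1 ?normr0.
Qed.

Lemma EED f g : bm f -> bm g -> EE (fun x => f x + g x) = EE f + EE g.
Proof. by move=> bf bg; rewrite /EE RintegralD //; apply: bm_int. Qed.

Lemma EEB f g : bm f -> bm g -> EE (fun x => f x - g x) = EE f - EE g.
Proof. by move=> bf bg; rewrite /EE RintegralB //; apply: bm_int. Qed.

Lemma EEZ k f : bm f -> EE (fun x => k * f x) = k * EE f.
Proof. by move=> bf; rewrite /EE RintegralZl //; apply: bm_int. Qed.

Lemma EEcst k : EE (fun _ => k) = k.
Proof.
rewrite /EE Rintegral_cst // [fine _](_ : _ = 1) ?mulr1 //.
exact: (congr1 fine (probability_setT D)).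
Qed.

Lemma EEle f g : bm f -> bm g -> (forall x, f x <= g x) -> EE f <= EE g.
Proof. by move=> bf bg fg; rewrite /EE le_Rintegral //; apply: bm_int. Qed.

End Aux.
Lemma le_int_nn (R : realType) (D : probability R R) (f g : R -> \bar R) :
  (forall x, (0 <= f x)%E) -> (forall x, (f x <= g x)%E) ->
  (\int[D]_x f x <= \int[D]_x g x)%E.
Proof.
move=> f0 fg; have g0 x : (0 <= g x)%E := le_trans (f0 x) (fg x).
rewrite !ge0_integralTE //; apply: ereal_sup_le => _ [s Hs <-].
by exists s => // x; exact: le_trans (Hs x) (fg x).
Qed.

Lemma sup_ge (R : realType) (u : nat -> \bar R) (V z : R) :
  0 <= V -> 0 <= z < 1 -> (forall N, ((V - V * z ^+ N)%:E <= u N)%E) ->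
  (V%:E <= ereal_sup (range u))%E.
Proof.
move=> V0 /andP[z0 z1] Hu; apply/lee_addgt0Pr => e e0.
pose eps := e / (V + 1).
have eps0 : 0 < eps by rewrite /eps divr_gt0 //; lra.
have Heps : (V + 1) * eps = e by rewrite /eps; field; lra.
have z1' : `|z| < 1 by rewrite ger0_norm.
have := cvg_expr z1'; move=> /cvgr_dist_le /(_ _ eps0) [N _ HN].
have := HN N (leqnn N); rewrite sub0r normrN ger0_norm ?exprn_ge0 // => zN.
have H : ((V - V * z ^+ N)%:E <= ereal_sup (range u))%E.
  by apply: le_trans (Hu N) _; apply: ereal_sup_ubound; exists N.
apply: le_trans (leeD H (lexx e%:E)).
rewrite -EFinD lee_fin; have := exprn_ge0 N z0; nra.
Qed.
Section Main.
Variable R : realType.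
Variable D : probability R R.
Variable h : R -> R.
Hypothesis hm : measurable_fun setT h.
Hypothesis hr : forall r, 0 <= h r <= 1.
Variables crew cver : R.
Hypothesis crew0 : 0 < crew.
Hypothesis cver0 : 0 < cver.

Lemma bh : bm h.
Proof. split => //; exists 1 => x; have := hr x => /andP[h0 h1]; rewrite ger0_norm //. Qed.

Definition gp t := fun r => Num.max (h r - t) 0.
Lemma bgp t : bm (gp t).
Proof. apply: bm_max0; apply: bmB; [exact: bh|exact: bm_cst]. Qed.
Definition F t := EE D (gp t).

Lemma F_mono t s : t <= s -> 0 <= F t - F s <= s - t.
Proof.
move=> ts; rewrite /F -EEB; [|exact: bgp|exact: bgp].
have bd : bm (fun x => gp t x - gp s x) by apply: bmB; apply: bgp.
apply/andP; split.
  rewrite -(EEcst D 0); apply: EEle => //; first exact: bm_cst.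
  by move=> x; rewrite /gp !maxEle; case: (leP (h x - t) 0); case: (leP (h x - s) 0); lra.
rewrite -[leRHS](EEcst D); apply: EEle => //; first exact: bm_cst.
by move=> x; rewrite /gp !maxEle; case: (leP (h x - t) 0); case: (leP (h x - s) 0); lra.
Qed.

Lemma F_lip t s : -`|t - s| <= F t - F s <= `|t - s|.
Proof.
case: (leP t s) => ts.
  have := F_mono _ _ ts; rewrite ler0_norm ?subr_le0 //; lra.
have := F_mono _ _ (ltW ts); rewrite ger0_norm ?subr_ge0 ?(ltW ts) //; lra.
Qed.

Definition G t := cver * F t - t * crew.

Lemma G_dec t s : t < s -> G s < G t.
Proof.
move=> ts; have /andP[H1 _] := F_mono _ _ (ltW ts).
have st : 0 < s - t by rewrite subr_gt0.
have := mulr_ge0 (ltW cver0) H1; have := mulr_gt0 crew0 st.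
rewrite /G; nra.
Qed.

Lemma cont_aux (x y Fx Fy cv cr d : R) : 0 < cv -> 0 < cr -> `|x - y| <= d ->
  -`|x - y| <= Fx - Fy <= `|x - y| ->
  `|cv * Fx - x * cr - (cv * Fy - y * cr)| <= (cv + cr) * d.
Proof.
move=> c1 c2 H1 H2; have : - d <= x - y <= d by rewrite -ler_norml.
have a0 := normr_ge0 (x - y); move: H1 H2 a0; set a := `|x - y| => H1 H2 a0 H3.
rewrite ler_norml; nra.
Qed.

Lemma G_cont : continuous G.
Proof.
move=> x; apply/cvgrPdist_le => e e0.
have k0 : 0 < cver + crew by exact: addr_gt0.
pose d := e / (cver + crew).
have d0 : 0 < d by rewrite /d divr_gt0.
have Hd : (cver + crew) * d = e by rewrite /d mulrC divfK // gt_eqF.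
have := @cvg_id _ (nbhs x); move=> /cvgr_dist_le /(_ _ d0).
apply: filterS => y Hy; rewrite -Hd /G; apply: cont_aux => //; exact: F_lip.
Qed.

Lemma EEh_pos : (0 < \int[D]_r (h r)%:E)%E -> 0 < EE D h.
Proof. by rewrite (intE D _ bh) lte_fin. Qed.

Lemma G0 : (0 < \int[D]_r (h r)%:E)%E -> 0 < G 0.
Proof.
move=> /EEh_pos H; rewrite /G /F mul0r subr0.
have -> : gp 0 = h.
  by apply: funext => r; rewrite /gp subr0 maxEle; case: leP => //; have := hr r; lra.
exact: mulr_gt0.
Qed.

Lemma G1 : G 1 < 0.
Proof.
rewrite /G /F mul1r.
have -> : gp 1 = (fun _ => 0).
  by apply: funext => r; rewrite /gp maxEle; case: leP => //; have := hr r; lra.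
by rewrite EEcst mulr0 sub0r oppr_lt0.
Qed.

Lemma G_root : (0 < \int[D]_r (h r)%:E)%E -> exists2 t, 0 < t < 1 & G t = 0.
Proof.
move=> hp; have g0 := G0 hp; have g1 := G1.
have Gc : {within `[0, 1], continuous G}.
  by apply: continuous_subspaceT; exact: G_cont.
have Hv : Num.min (G 0) (G 1) <= 0 <= Num.max (G 0) (G 1).
  rewrite ge_min le_max; apply/andP; split; apply/orP; [right|left]; exact: ltW.
have [t] := @IVT R G 0 1 0 ler01 Gc Hv.
rewrite in_itv /= => /andP[t0 t1] Gt; exists t => //.
apply/andP; split; rewrite lt_neqAle ?t0 ?t1 andbT; apply/eqP => E.
  by move: g0; rewrite E Gt; lra.
by move: g1; rewrite -E Gt; lra.
Qed.


Section Tau.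
Variable tau : R.
Hypothesis tau0 : 0 < tau.
Hypothesis tau1 : tau < 1.
Hypothesis Gtau : G tau = 0.

Definition V := cver / tau.
Lemma V0 : 0 < V. Proof. by rewrite /V divr_gt0. Qed.
Lemma Vtau : cver = V * tau.
Proof. by rewrite /V divfK // gt_eqF. Qed.
Lemma crewF : crew = V * F tau.
Proof.
move: Gtau; rewrite /G => /eqP; rewrite subr_eq0 => /eqP H.
apply: (mulIf (x:=tau)); first by rewrite gt_eqF.
by rewrite mulrAC -Vtau H mulrC.
Qed.

Lemma F_le1 t : 0 <= t -> F t <= 1.
Proof.
move=> t0; rewrite /F -(EEcst D 1); apply: EEle; [exact: bgp|exact: bm_cst|].
move=> x; rewrite /gp maxEle; case: (leP (h x - t) 0) => _ //; have := hr x; lra.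
Qed.

Lemma crew_le_V : crew <= V.
Proof. rewrite crewF; have := F_le1 _ (ltW tau0); have := V0; nra. Qed.

Definition pth := fun r => if tau <= h r then 1 else 0 : R.
Lemma bpth : bm pth. Proof. exact: bm_ind. Qed.
Lemma bph : bm (fun r => pth r * h r).
Proof. apply: bmM; [exact: bpth|exact: bh]. Qed.
Definition P := EE D pth.
Definition Q := EE D (fun r => pth r * h r).

Lemma F_PQ : F tau = Q - tau * P.
Proof.
rewrite /F /Q /P -EEZ; last exact: bpth.
rewrite -EEB; [|exact: bph|]; last by apply: bmM; [exact: bm_cst|exact: bpth].
congr EE; apply: funext => r; rewrite /gp /pth maxEle.
by case: (leP (h r - tau) 0); case: (leP tau (h r)); lra.
Qed.

Lemma P0 : 0 <= P.
Proof.
rewrite /P -(EEcst D 0); apply: EEle; [exact: bm_cst|exact: bpth|].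
by move=> x; rewrite /pth; case: ifP.
Qed.

Lemma Q_bounds : 0 < Q <= 1.
Proof.
have Fp : 0 < F tau.
  by rewrite -(pmulr_rgt0 (F tau) V0) -crewF.
apply/andP; split.
  by have := F_PQ; have := mulr_ge0 (ltW tau0) P0; lra.
rewrite /Q -(EEcst D 1); apply: EEle; [exact: bph|exact: bm_cst|].
by move=> x; rewrite /pth; case: ifP; have := hr x; lra.
Qed.

Definition a N := V - V * (1 - Q) ^+ N.

Lemma thr_cost N : forall n (hist : n.-tuple (round R)),
  cost_horizon D h crew cver (threshold_policy h tau) N hist = (a N)%:E.
Proof.
elim: N => [|N IH] n hist /=.
  by rewrite /a expr0 mulr1 subrr.
under eq_integral => r _ do rewrite !IH -!EFinM -!EFinD.
have bf : bm (fun r => threshold_policy h tau hist r * cver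
    + threshold_policy h tau hist r * (1 - h r) * a N
    + (1 - threshold_policy h tau hist r) * a N).
  rewrite /threshold_policy.
  apply: bmD; [apply: bmD|].
  - by apply: bmM; [exact: bpth|exact: bm_cst].
  - apply: bmM; [apply: bmM; [exact: bpth|]|exact: bm_cst].
    by apply: bmB; [exact: bm_cst|exact: bh].
  - apply: bmM; [apply: bmB; [exact: bm_cst|exact: bpth]|exact: bm_cst].
rewrite (intE D _ bf) -EFinD; congr EFin.
have -> : (fun r => threshold_policy h tau hist r * cver
    + threshold_policy h tau hist r * (1 - h r) * a N
    + (1 - threshold_policy h tau hist r) * a N) =
    (fun r => a N + (cver * pth r - a N * (pth r * h r))).
  by apply: funext => r; rewrite /threshold_policy /pth; case: ifP => _; ring.
rewrite EED; [|exact: bm_cst|]; last first.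
  by apply: bmB; apply: bmM; [exact: bm_cst|exact: bpth|exact: bm_cst|exact: bph].
rewrite EEcst EEB; [|by apply: bmM; [exact: bm_cst|exact: bpth]|]; last first.
  by apply: bmM; [exact: bm_cst|exact: bph].
rewrite !EEZ; [|exact: bph|exact: bpth].
rewrite -/P -/Q.
rewrite crewF F_PQ Vtau /a exprS; ring.
Qed.



Definition phi w := fun r => Num.max (h r * w - cver) 0.
Lemma bphi w : bm (phi w).
Proof.
apply: bm_max0; apply: bmB; [apply: bmM; [exact: bh|exact: bm_cst]|exact: bm_cst].
Qed.

Fixpoint W N := match N with 0 => 0 | N'.+1 => crew + W N' - EE D (phi (W N')) end.

Lemma phiV : EE D (phi V) = crew.
Proof.
rewrite crewF /F -EEZ; last exact: bgp.
congr EE; apply: funext => r; rewrite /phi /gp Vtau !maxEle.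
have := V0; have := hr r.
by case: (leP (h r * V - V * tau) 0); case: (leP (h r - tau) 0); nra.
Qed.

Lemma phi_step w : 0 <= w <= V ->
  crew - EE D (phi w) <= V - w /\ EE D (phi w) <= (w / V) * crew.
Proof.
move=> /andP[w0 wV]; have v0 := V0.
split.
  rewrite -{1}phiV -EEB; [|exact: bphi|exact: bphi].
  rewrite -[leRHS](EEcst D); apply: EEle; [by apply: bmB; exact: bphi|exact: bm_cst|].
  move=> x; rewrite /phi !maxEle; have := hr x => /andP[h0 h1].
  have : h x * (V - w) <= V - w by nra.
  by case: (leP (h x * V - cver) 0); case: (leP (h x * w - cver) 0); nra.
rewrite -phiV -EEZ; last exact: bphi.
apply: EEle; [exact: bphi|by apply: bmM; [exact: bm_cst|exact: bphi]|].
move=> x; set k := w / V.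
have wk : w = k * V by rewrite /k divfK // gt_eqF.
have k0 : 0 <= k by rewrite /k divr_ge0 // ltW.
have k1 : k <= 1 by rewrite /k ler_pdivrMr // mul1r.
rewrite /phi !maxEle wk; have := hr x => /andP[h0 h1].
have hv : 0 <= h x * V by nra.
have : 0 <= (1 - k) * (h x * V) by apply: mulr_ge0 => //; lra.
have := cver0.
by case: (leP (h x * V - cver) 0); case: (leP (h x * (k * V) - cver) 0); nra.
Qed.

Lemma W_bnd N : 0 <= W N <= V /\ V - W N <= (1 - crew / V) ^+ N * V.
Proof.
have v0 := V0.
elim: N => [|N [/andP[w0 wV] IH]] /=.
  by rewrite expr0 mul1r subr0; split => //; rewrite lexx (ltW v0).
have [s1 s2] : crew - EE D (phi (W N)) <= V - W N /\ EE D (phi (W N)) <= (W N / V) * crew.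
  by apply: phi_step; rewrite w0 wV.
set w := W N in w0 wV IH s1 s2 *; set f := EE D (phi w) in s1 s2 *.
set k := w / V in s2.
have wk : w = k * V by rewrite /k divfK // gt_eqF.
set c := crew / V in IH *.
have cc : crew = c * V by rewrite /c divfK // gt_eqF.
have c1 : c <= 1 by rewrite /c ler_pdivrMr // mul1r crew_le_V.
have c0 : 0 < c by rewrite /c divr_gt0.
have k1 : k <= 1 by rewrite /k ler_pdivrMr // mul1r.
rewrite exprS.
have rho0 : 0 <= 1 - c by lra.
have := mulr_ge0 rho0 (exprn_ge0 N rho0).
move: IH s2; rewrite wk cc => IH s2.
have := ler_wpM2l rho0 IH.
move: s1; rewrite wk cc => s1.
split; [apply/andP; split|]; nra.
Qed.

Lemma aux1 (w x c : R) : 0 <= w -> 0 <= x <= 1 -> 0 < c ->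
  0 <= w - Num.max (x * w - c) 0.
Proof. move=> w0 /andP[h0 h1] c0; rewrite maxEle; case: (leP (x * w - c) 0); nra. Qed.

Lemma aux2 (w x c p : R) : 0 <= w -> 0 <= x <= 1 -> 0 < c -> 0 <= p <= 1 ->
  w - Num.max (x * w - c) 0 <= p * c + p * (1 - x) * w + (1 - p) * w.
Proof.
move=> w0 /andP[h0 h1] c0 /andP[p0 p1]; rewrite maxEle.
case: (leP (x * w - c) 0); nra.
Qed.

Lemma pol_lb (pol : streaming_policy R) : is_streaming_policy pol ->
  forall N n (hist : n.-tuple (round R)),
  ((W N)%:E <= cost_horizon D h crew cver pol N hist)%E.
Proof.
move=> Hp; elim => [|N IH] n hist /=; first by [].
have [/andP[w0 wV] _] := W_bnd N.
rewrite -addrA EFinD; apply: leeD2l.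
have bf : bm (fun x => W N - phi (W N) x).
  by apply: bmB; [exact: bm_cst|exact: bphi].
rewrite (_ : (W N - EE D (phi (W N)))%:E = (\int[D]_x ((W N - phi (W N) x)%:E))%E);
  last by rewrite (intE D _ bf) EEB ?EEcst //; [exact: bm_cst|exact: bphi].
apply: le_int_nn => r.
  by rewrite lee_fin /phi; apply: aux1 => //; exact: hr.
have /andP[p0 p1] := (Hp n).2 hist r.
set p := pol n hist r.
apply: le_trans (leeD (leeD (lexx _) (lee_wpmul2l _ (IH _ _))) (lee_wpmul2l _ (IH _ _))).
- by rewrite -!EFinM -!EFinD lee_fin /phi; apply: aux2; [exact: w0|exact: hr|exact: cver0|by rewrite p0 p1].
- by rewrite lee_fin; apply: mulr_ge0 => //; have := hr r; lra.
- by rewrite lee_fin subr_ge0.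
Qed.

Lemma thr_policy : is_streaming_policy (threshold_policy h tau).
Proof.
move=> n; split.
  have -> : (fun p : n.-tuple (round R) * R => threshold_policy h tau p.1 p.2)
      = pth \o snd by [].
  apply: measurableT_comp; [exact: bpth.1|exact: measurable_snd].
by move=> hist r; rewrite /threshold_policy; case: ifP => _; rewrite ?lexx ?ler01.
Qed.

Lemma thr_expected : expected_cost D h crew cver (threshold_policy h tau) = V%:E.
Proof.
rewrite /expected_cost.
have -> : (fun N => cost_horizon D h crew cver (threshold_policy h tau) N [tuple])
    = (fun N => (a N)%:E) by apply: funext => N; exact: thr_cost.
have /andP[q0 q1] := Q_bounds.
apply/eqP; rewrite eq_le; apply/andP; split.
  apply: ge_ereal_sup => _ [N _ <-]; rewrite lee_fin /a.
  have q1' : 0 <= 1 - Q by rewrite subr_ge0.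
  have := mulr_ge0 (ltW V0) (exprn_ge0 N q1'); lra.
apply: (@sup_ge R _ V (1 - Q)); first exact: ltW V0.
  by apply/andP; split; lra.
by move=> N; rewrite /a.
Qed.

Lemma pol_expected (pol : streaming_policy R) : is_streaming_policy pol ->
  (V%:E <= expected_cost D h crew cver pol)%E.
Proof.
move=> Hp; rewrite /expected_cost.
apply: (@sup_ge R _ V (1 - crew / V)); first exact: ltW V0.
  have c0 : 0 < crew / V by rewrite divr_gt0 // V0.
  have c1 : crew / V <= 1 by rewrite ler_pdivrMr ?V0 // mul1r crew_le_V.
  by apply/andP; split; lra.
move=> N; apply: le_trans (pol_lb _ Hp N _ [tuple]).
have [_ H] := W_bnd N; rewrite lee_fin; lra.
Qed.

End Tau.
End Main.

Theorem lemma1 (R : realType) (D : probability R R) (hstar : R -> R)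
  (crew cver : R)
  (hmeas : measurable_fun setT hstar)
  (hrange : forall r : R, 0 <= hstar r <= 1)
  (hpos : (0 < \int[D]_r (hstar r)%:E)%E)
  (crew_pos : 0 < crew) (cver_pos : 0 < cver) :
  exists tau : R,
    [/\ 0 < tau < 1,
        (cver%:E * \int[D]_r (Num.max (hstar r - tau) 0)%:E = (tau * crew)%:E)%E,
        (forall tau' : R, 0 < tau' < 1 ->
           (cver%:E * \int[D]_r (Num.max (hstar r - tau') 0)%:E = (tau' * crew)%:E)%E ->
           tau' = tau),
        Jstar_str D hstar crew cver = (cver / tau)%:E
      & is_streaming_policy (threshold_policy hstar tau) /\
        expected_cost D hstar crew cver (threshold_policy hstar tau) = (cver / tau)%:E].
Proof.
have [tau /andP[t0 t1] Gt] := G_root R D hstar hmeas hrange _ _ crew_pos cver_pos hpos.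
have eqG t : (cver%:E * \int[D]_r (Num.max (hstar r - t) 0)%:E = (t * crew)%:E)%E
    <-> G R D hstar crew cver t = 0.
  rewrite (intE D _ (bgp _ _ hmeas hrange t)) -EFinM; split.
    by case => H; rewrite /G /F H subrr.
  by move=> H; congr EFin; apply/eqP; rewrite -subr_eq0; apply/eqP.
exists tau; split.
- by rewrite t0 t1.
- exact/eqG.
- move=> t' /andP[t'0 t'1] /eqG Gt'.
  case: (ltgtP t' tau) => // H.
    by have := G_dec R D hstar hmeas hrange _ _ crew_pos cver_pos _ _ H; rewrite Gt Gt' ltxx.
  by have := G_dec R D hstar hmeas hrange _ _ crew_pos cver_pos _ _ H; rewrite Gt Gt' ltxx.
- rewrite /Jstar_str; apply/eqP; rewrite eq_le; apply/andP; split.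
    apply: ge_ereal_inf; exists (expected_cost D hstar crew cver (threshold_policy hstar tau)).
      by exists (threshold_policy hstar tau) => //; exact: (thr_policy _ _ hmeas).
    by rewrite (thr_expected R D hstar hmeas hrange _ _ crew_pos cver_pos _ t0 Gt).
  apply: le_ereal_inf_tmp => _ [pol Hp <-].
  exact: (pol_expected R D hstar hmeas hrange _ _ crew_pos cver_pos _ t0 Gt _ Hp).
- split; first exact: (thr_policy _ _ hmeas).
  exact: (thr_expected R D hstar hmeas hrange _ _ crew_pos cver_pos _ t0 Gt).
Qed.
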